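(* Let $1<K<n$, let $\|\cdot\|_s$ be a sign- and permutation-invariant norm on $\mathbb{R}^n$, and let $\|\cdot\|_c$ be the gauge of $\mathrm{conv}(N^K_{\|\cdot\|_s})$. Then for every $x\in\mathbb{R}^n$, $\|x\|_c=\|u(x)\|_s$.
   Context: A norm is sign- and permutation-invariant if $\|Px\|_s=\|x\|_s$ for every permutation matrix $P$ and $\|\bar x\|_s=\|x\|_s$ whenever $|\bar x|=|x|$ componentwise. $N^K_{\|\cdot\|_s}=\{x\in\mathbb{R}^n\mid\|x\|_s\le 1,\ \mathrm{card}(x)\le K\}$, where $\mathrm{card}(x)$ is the number of nonzero entries. $\mathrm{conv}(N^K_{\|\cdot\|_s})$ is a compact convex set, symmetric about 0, containing 0 in its interior, and its gauge $\|x\|_c=\min\{t>0\mid x/t\in\mathrm{conv}(N^K_{\|\cdot\|_s})\}$ is a norm. For $x\in\mathbb{R}^n$, with $|x|_{[i]}$ the $i$-th largest absolute value of entries of $x$: $s(x)_i=\frac{\sum_{j=i}^n|x|_{[j]}}{K-i+1}$ ($i=1,\dots,K$); $i_x$ is the smallest index in $\{1,\dots,K\}$ minimizing $s(x)_i$; $\delta(x)=s(x)_{i_x}$; $u(x)_i=|x|_{[i]}$ for $i<i_x$, $u(x)_i=\delta(x)$ for $i_x\le i\le K$, $u(x)_i=0$ for $i>K$. *)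

(* Defs.v *)
From Stdlib Require Import Reals.
From mathcomp Require Import ssreflect ssrfun ssrbool eqtype ssrnat seq path fintype bigop.

Set Implicit Arguments.
Unset Strict Implicit.
Unset Printing Implicit Defensive.

Local Open Scope R_scope.

Notation vec n := ('I_n -> R).

Definition Rsum (m : nat) (f : 'I_m -> R) : R := \big[Rplus/0]_(j < m) f j.

Definition is_norm (n : nat) (N : vec n -> R) : Prop :=
  (forall x, N x = 0 -> forall i, x i = 0) /\
  (forall (a : R) x, N (fun i => a * x i) = Rabs a * N x) /\
  (forall x y, N (fun i => x i + y i) <= N x + N y).

Definition perm_invariant (n : nat) (N : vec n -> R) : Prop :=
  forall (sigma : 'I_n -> 'I_n) (x : vec n), bijective sigma ->
    N (fun i => x (sigma i)) = N x.

Definition sign_invariant (n : nat) (N : vec n -> R) : Prop :=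
  forall x y : vec n, (forall i, Rabs (y i) = Rabs (x i)) -> N y = N x.

Definition card_nz (n : nat) (x : vec n) : nat :=
  #|[pred i : 'I_n | if Req_EM_T (x i) 0 then false else true]|.

Definition NK (n K : nat) (N : vec n -> R) (x : vec n) : Prop :=
  N x <= 1 /\ (card_nz x <= K)%N.

Definition conv (n : nat) (S : vec n -> Prop) (y : vec n) : Prop :=
  exists (m : nat) (l : 'I_m -> R) (p : 'I_m -> vec n),
    (forall j, 0 <= l j) /\ Rsum l = 1 /\ (forall j, S (p j)) /\
    (forall i, y i = Rsum (fun j => l j * p j i)).

(* g is the gauge of C at x:  g = inf { t > 0 | x / t \in C }
   (for C compact convex with 0 in its interior, this is a min for x <> 0,
    and 0 for x = 0) *)
Definition is_gauge (n : nat) (C : vec n -> Prop) (x : vec n) (g : R) : Prop :=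
  (forall t, 0 < t -> C (fun i => x i / t) -> g <= t) /\
  (forall b, (forall t, 0 < t -> C (fun i => x i / t) -> b <= t) -> b <= g).

(* absolute values of entries sorted in non-increasing order;
   (abs_sorted x)`_(k) = |x|_[k+1]  (0-based index k) *)
Definition abs_sorted (n : nat) (x : vec n) : seq R :=
  sort (fun a b => if Rle_dec b a then true else false)
       [seq Rabs (x i) | i <- enum 'I_n].

Definition absx (n : nat) (x : vec n) (k : nat) : R := nth 0 (abs_sorted x) k.

(* s(x)_(k+1) for 0-based k in 0..K-1:
   (sum_{j=k}^{n-1} |x|_[j+1]) / (K - k) *)
Definition sx (n K : nat) (x : vec n) (k : nat) : R :=
  (\big[Rplus/0]_(k <= j < n) absx x j) / INR (K - k).

(* 0-based index of the smallest minimizer of sx over 0..K-1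
   (i_x = ix + 1); scanning left to right, replace only on strict decrease *)
Definition ix (n K : nat) (x : vec n) : nat :=
  foldl (fun best k => if Rlt_dec (sx K x k) (sx K x best) then k else best)
        0%N (iota 1 (K - 1)).

Definition delta (n K : nat) (x : vec n) : R := sx K x (ix K x).

Definition u (n K : nat) (x : vec n) : vec n :=
  fun i => if (i < ix K x)%N then absx x i
           else if (i < K)%N then delta K x else 0.

(* Main.v *)
Require Import Defs.
From Stdlib Require Import Reals Lra Lia Psatz Classical.
From HB Require Import structures.
From mathcomp Require Import ssreflect ssrfun ssrbool eqtype ssrnat seq path choice fintype finfun tuple bigop finset fingroup perm.
From mathcomp Require Import zify.

Set Implicit Arguments.
Unset Strict Implicit.
Unset Printing Implicit Defensive.
Local Open Scope R_scope.

Definition Reqb (a b : R) : bool := if Req_EM_T a b then true else false.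
Lemma ReqbP : Equality.axiom Reqb.
Proof. move=> a b; rewrite /Reqb; case: (Req_EM_T a b) => h; [by constructor|by constructor]. Qed.
HB.instance Definition _ := hasDecEq.Build R ReqbP.

HB.instance Definition _ := Monoid.isComLaw.Build R 0 Rplus (fun a b c => esym (Rplus_assoc a b c)) Rplus_comm Rplus_0_l.
HB.instance Definition _ := Monoid.isMulLaw.Build R 0 Rmult Rmult_0_l Rmult_0_r.
HB.instance Definition _ := Monoid.isAddLaw.Build R Rmult Rplus Rmult_plus_distr_r Rmult_plus_distr_l.

Lemma Rsum_le (I : Type) (r : seq I) (P : pred I) (F G : I -> R) :
  (forall i, P i -> F i <= G i) ->
  \big[Rplus/0]_(i <- r | P i) F i <= \big[Rplus/0]_(i <- r | P i) G i.
Proof. move=> h; apply: (big_ind2 (fun a b => a <= b)) => //; [lra|]; move=> *; lra. Qed.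

Lemma Rsum_ge0 (I : Type) (r : seq I) (P : pred I) (F : I -> R) :
  (forall i, P i -> 0 <= F i) -> 0 <= \big[Rplus/0]_(i <- r | P i) F i.
Proof. move=> h; apply: (big_ind (fun a => 0 <= a)) => //; [lra|]; move=> *; lra. Qed.

Lemma Rsum_distr (I : Type) (r : seq I) (P : pred I) (F : I -> R) c :
  c * \big[Rplus/0]_(i <- r | P i) F i = \big[Rplus/0]_(i <- r | P i) (c * F i).
Proof. by rewrite big_distrr. Qed.

Lemma Rsum_plus (I : Type) (r : seq I) (P : pred I) (F G : I -> R) :
  \big[Rplus/0]_(i <- r | P i) (F i + G i) = \big[Rplus/0]_(i <- r | P i) F i + \big[Rplus/0]_(i <- r | P i) G i.
Proof. by rewrite big_split. Qed.

Lemma Rsum_abs (I : Type) (r : seq I) (P : pred I) (F : I -> R) :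
  Rabs (\big[Rplus/0]_(i <- r | P i) F i) <= \big[Rplus/0]_(i <- r | P i) Rabs (F i).
Proof. apply: (big_ind2 (fun a b => Rabs a <= b)).
  - rewrite Rabs_R0; lra.
  - move=> a b c d h1 h2; have := Rabs_triang a c; lra.
  - move=> i _; lra. Qed.

Lemma Rabs_ratio a b : b <> 0 -> Rabs a <= Rabs b -> -1 <= a/b <= 1.
Proof. move=> hb hab. have e : a = (a/b)*b by field.
  move: e hab; set r := a/b; clearbody r => -> hab.
  unfold Rabs in hab; destruct (Rcase_abs (r*b)); destruct (Rcase_abs b); split; nra. Qed.
Lemma Rabs0 a : Rabs a <= 0 -> a = 0.
Proof. unfold Rabs; destruct (Rcase_abs a); lra. Qed.


Definition rlt (a b : R) : bool := if Rlt_dec a b then true else false.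
Lemma rltP a b : reflect (a < b) (rlt a b).
Proof. rewrite /rlt; case: (Rlt_dec a b) => h; [by constructor|by constructor]. Qed.
Definition rneq (a b : R) : bool := if Req_EM_T a b then false else true.
Lemma rneqP a b : reflect (a <> b) (rneq a b).
Proof. rewrite /rneq; case: (Req_EM_T a b) => h; [by constructor|by constructor]. Qed.


Section Norm.
Variable n : nat.
Variable Ns : ('I_n -> R) -> R.
Hypothesis hN : is_norm Ns.
Hypothesis hS : sign_invariant Ns.
Hypothesis hP : perm_invariant Ns.

Lemma N_ext f g : (forall i, f i = g i) -> Ns f = Ns g.
Proof. move=> h; apply: hS => i; by rewrite h. Qed.

Lemma N_scale a f : Ns (fun i => a * f i) = Rabs a * Ns f.
Proof. by case: hN => _ [h _]. Qed.

Lemma N_add f g : Ns (fun i => f i + g i) <= Ns f + Ns g.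
Proof. by case: hN => _ [_ h]. Qed.

Lemma N0 : Ns (fun _ => 0) = 0.
Proof. rewrite (@N_ext _ (fun i => 0 * 0)); last by move=> i; ring.
  by rewrite N_scale Rabs_R0 Rmult_0_l. Qed.

Lemma N_ge0 f : 0 <= Ns f.
Proof. have h := N_add f (fun i => -1 * f i).
  rewrite N_scale (@N_ext _ (fun _ => 0)) ?N0 in h; last by move=> i; ring.
  rewrite Rabs_Ropp Rabs_R1 in h; lra. Qed.

Lemma N_sum (M : nat) (l : 'I_M -> R) (w : 'I_M -> 'I_n -> R) :
  (forall j, 0 <= l j) ->
  Ns (fun i => \big[Rplus/0]_(j < M) (l j * w j i)) <= \big[Rplus/0]_(j < M) (l j * Ns (w j)).
Proof.
  elim: M l w => [|M IH] l w hl.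
    rewrite big_ord0 (@N_ext _ (fun _ => 0)) ?N0; [lra|by move=> i; rewrite big_ord0].
  rewrite big_ord_recr /=.
  rewrite (@N_ext _ (fun i => \big[Rplus/0]_(j < M) (l (widen_ord (leqnSn M) j) * w (widen_ord (leqnSn M) j) i)
     + l ord_max * w ord_max i)); last by move=> i; rewrite big_ord_recr.
  apply: Rle_trans; first apply: N_add.
  rewrite N_scale Rabs_pos_eq; last by apply: hl.
  have := IH (fun j => l (widen_ord (leqnSn M) j)) (fun j => w (widen_ord (leqnSn M) j)) (fun j => hl _).
  move=> h; exact: Rplus_le_compat_r h.
Qed.

Lemma N_perm (s : 'I_n -> 'I_n) f : bijective s -> Ns (fun i => f (s i)) = Ns f.
Proof. move=> hs; exact: hP. Qed.

Lemma N_abs f : Ns (fun i => Rabs (f i)) = Ns f.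
Proof. apply: hS => i; by rewrite Rabs_Rabsolu. Qed.

Lemma N_conv2 a b lam : 0 <= lam <= 1 -> Ns (fun i => lam * a i + (1 - lam) * b i) <= lam * Ns a + (1 - lam) * Ns b.
Proof. move=> hl; apply: Rle_trans; first apply: N_add.
  rewrite !N_scale !Rabs_pos_eq; lra. Qed.

Lemma N_mono a b : (forall i, Rabs (a i) <= Rabs (b i)) -> Ns a <= Ns b.
Proof.
  move=> hab.
  pose w k := fun i : 'I_n => if (i < k)%N then a i else b i.
  suff H : forall k, Ns (w k) <= Ns b.
    rewrite (@N_ext a (w n)); first exact: H.
    by move=> i; rewrite /w ltn_ord.
  elim=> [|k IH].
    by rewrite (@N_ext (w 0%N) b); [lra| move=> i; rewrite /w ltn0].
  case: (ltnP k n) => hk; last first.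
    rewrite (@N_ext (w k.+1) (w k)) //.
    move=> i; rewrite /w; have h1 := ltn_ord i.
    have -> : (i < k.+1)%N by lia.
    by have -> : (i < k)%N by lia.
  set i0 := Ordinal hk.
  case: (Req_EM_T (b i0) 0) => hb0.
    rewrite (@N_ext (w k.+1) (w k)) //.
    move=> i; rewrite /w; case: (ltnP i k) => hik; first by have -> : (i < k.+1)%N by lia.
    case: (ltnP i k.+1) => hik2 //.
    have ei : i = i0 by apply: val_inj => /=; lia.
    have := hab i; rewrite ei hb0 Rabs_R0; exact: Rabs0.
  pose lam := (1 + a i0 / b i0) / 2.
  have hq := Rabs_ratio hb0 (hab i0).
  have hlam : 0 <= lam <= 1 by rewrite /lam; lra.
  pose fl := fun i : 'I_n => if i == i0 then - w k i else w k i.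
  have hfl : Ns fl = Ns (w k) by apply: hS => i; rewrite /fl; case: (i == i0) => //; rewrite Rabs_Ropp.
  have : Ns (w k.+1) <= lam * Ns (w k) + (1 - lam) * Ns fl.
    apply: Rle_trans (N_conv2 (w k) fl hlam); right; apply: N_ext => i.
    rewrite /fl /w; case: (eqVneq i i0) => [->|hne] /=.
      rewrite ltnSn ltnn /lam; field; exact hb0.
    case: (ltnP i k) => hik; first by (have -> : (i < k.+1)%N by lia); ring.
    have -> : (i < k.+1)%N = false.
      apply/negbTE/negP => hh; move/eqP: hne; apply; apply: val_inj => /=; lia.
    ring.
  rewrite hfl; lra.
Qed.


Lemma sum_delta (P : pred 'I_n) (k : 'I_n) c :
  \big[Rplus/0]_(i | P i) (if i == k then c else 0) = if P k then c else 0.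
Proof.
  case hk: (P k).
    rewrite (bigD1 k) //= eqxx big1 ?Rplus_0_r // => i /andP[_ h]; by rewrite (negbTE h).
  rewrite big1 // => i hi; case: eqP => // e; by rewrite -e hi in hk.
Qed.

Lemma sum_prefixS (f : 'I_n -> R) (k : 'I_n) :
  \big[Rplus/0]_(i < n | (i < k.+1)%N) f i = \big[Rplus/0]_(i < n | (i < k)%N) f i + f k.
Proof.
  rewrite (bigD1 k) //= Rplus_comm; congr Rplus; apply: eq_bigl => i.
  case: (eqVneq i k) => [->|h] /=; first by rewrite ltnn andbF.
  have h' : (nat_of_ord i) <> (nat_of_ord k) by move=> e; move/eqP: h; apply; apply: val_inj.
  rewrite andbT; apply/idP/idP => hh; lia.
Qed.

Lemma sum_split_at (f : 'I_n -> R) (j : 'I_n) K' : (j < K')%N ->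
  \big[Rplus/0]_(i < n | (i < K')%N) f i = \big[Rplus/0]_(i < n | (i < j)%N) f i + f j
     + \big[Rplus/0]_(i < n | (j < i)%N && (i < K')%N) f i.
Proof.
  move=> hj; rewrite (bigID (fun i : 'I_n => (i < j)%N)) /= Rplus_assoc; congr Rplus.
    apply: eq_bigl => i; apply/idP/idP => [/andP[]//|h]; apply/andP; split => //; lia.
  rewrite (bigD1 j) /=; last by rewrite hj ltnn.
  congr Rplus; apply: eq_bigl => i.
  case: (eqVneq i j) => [->|h] /=; first by rewrite ltnn andbF.
  have h' : (nat_of_ord i) <> (nat_of_ord j) by move=> e; move/eqP: h; apply; apply: val_inj.
  rewrite andbT; apply/idP/idP => hh; lia.
Qed.

Lemma N_major (u v : 'I_n -> R) :
  (forall i, 0 <= u i) ->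
  (forall i j : 'I_n, (i <= j)%N -> u j <= u i) ->
  (forall k, (k <= n)%N -> \big[Rplus/0]_(i < n | (i < k)%N) u i <= \big[Rplus/0]_(i < n | (i < k)%N) v i) ->
  Ns u <= Ns v.
Proof.
  move=> u0 usort.
  suff H : forall N v, (#|[pred i | rneq (v i) (u i)]| <= N)%N ->
     (forall k, (k <= n)%N -> \big[Rplus/0]_(i < n | (i < k)%N) u i <= \big[Rplus/0]_(i < n | (i < k)%N) v i) ->
     Ns u <= Ns v.
    by apply: H.
  elim=> [|N IH] {}v hmu hpre.
  - apply: N_mono => i; have : ~~ rneq (v i) (u i).
      apply/negP => hh; move: hmu; rewrite leqn0 => /eqP/card0_eq/(_ i); by rewrite inE hh.
    move/rneqP => h; have -> : v i = u i by apply: NNPP.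
    lra.
  case: (boolP [exists i, rlt (v i) (u i)]) => hex; last first.
    apply: N_mono => i; have : ~~ rlt (v i) (u i) by move: hex; rewrite negb_exists => /forallP.
    move/rltP/Rnot_lt_le => h; have h0 := u0 i; rewrite !Rabs_pos_eq; lra.
  case/existsP: hex => i0 hi0.
  case: (@arg_minnP _ i0 (fun i => rlt (v i) (u i)) (fun i => nat_of_ord i) hi0) => k /rltP hk kmin.
  have hexj : exists j : 'I_n, ((j < k)%N && rlt (u j) (v j)).
    apply: NNPP => hno.
    have hle : forall j : 'I_n, (j < k)%N -> v j <= u j.
      move=> j hj; apply: Rnot_lt_le => hh; apply: hno; exists j; rewrite hj /=; exact/rltP.
    have := hpre k.+1 (ltn_ord k); rewrite !sum_prefixS => h1.
    have : \big[Rplus/0]_(i < n | (i < k)%N) v i <= \big[Rplus/0]_(i < n | (i < k)%N) u i by apply: Rsum_le.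
    lra.
  case: hexj => j0 hj0.
  case: (@arg_maxnP _ j0 (fun j : 'I_n => (j < k)%N && rlt (u j) (v j)) (fun i => nat_of_ord i) hj0) => j /andP[hjk /rltP hj] jmax.
  have hmid : forall i : 'I_n, (j < i)%N -> (i < k)%N -> v i = u i.
    move=> i h1 h2; apply: Rle_antisym.
      apply: Rnot_lt_le => hh; have := jmax i; rewrite h2 /= => /(_ (introT (rltP _ _) hh)); lia.
    apply: Rnot_lt_le => hh; have := kmin i (introT (rltP _ _) hh); lia.
  set eps := Rmin (v j - u j) (u k - v k).
  have heps : 0 < eps by apply: Rmin_glb_lt; lra.
  have heps1 : eps <= v j - u j by apply: Rmin_l.
  have heps2 : eps <= u k - v k by apply: Rmin_r.
  have hjk' : j != k by apply/eqP => e; rewrite e ltnn in hjk.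
  pose v' := fun i : 'I_n => v i + ((if i == k then eps else 0) - (if i == j then eps else 0)).
  have hv'j : v' j = v j - eps by rewrite /v' eqxx (negbTE hjk'); ring.
  have hv'k : v' k = v k + eps by rewrite /v' eqxx eq_sym (negbTE hjk'); ring.
  have hv'o : forall i, i != j -> i != k -> v' i = v i.
    by move=> i h1 h2; rewrite /v' (negbTE h1) (negbTE h2); ring.
  pose sw := fun i : 'I_n => if i == j then k else if i == k then j else i.
  have swK : cancel sw sw.
    move=> i; rewrite /sw; case: (eqVneq i j) => [->|h1]; first by rewrite ?eqxx eq_sym (negbTE hjk') ?eqxx.
    case: (eqVneq i k) => [->|h2]; first by rewrite ?eqxx.
    by rewrite (negbTE h1) (negbTE h2).
  have hsw : bijective sw by exists sw.
  set lam := eps / (v j - v k).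
  have := usort j k (ltnW hjk) => hu.
  have hd : 0 < v j - v k by lra.
  have hlam : 0 <= lam <= 1.
    rewrite /lam; split; first by apply: Rmult_le_pos; [lra|apply: Rlt_le; apply: Rinv_0_lt_compat; lra].
    apply: (Rmult_le_reg_r (v j - v k)) => //. rewrite Rmult_1_l /Rdiv Rmult_assoc Rinv_l; lra.
  have hvv' : Ns v' <= Ns v.
    have e : Ns v' = Ns (fun i => lam * v (sw i) + (1 - lam) * v i).
      apply: N_ext => i; rewrite /sw.
      case: (eqVneq i j) => [->|h1]; first by rewrite ?eqxx hv'j /lam; field; lra.
      case: (eqVneq i k) => [->|h2]; first by rewrite ?eqxx ?(negbTE h1) hv'k /lam; field; lra.
      rewrite hv'o //; ring.
    rewrite e; apply: Rle_trans; first exact: (N_conv2 _ _ hlam).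
    rewrite (N_perm v hsw); lra.
  apply: Rle_trans hvv'; apply: IH.
  -
    rewrite -ltnS; apply: leq_trans hmu; apply: proper_card; apply/properP; split.
      apply/subsetP => i; rewrite !inE => /rneqP h; apply/rneqP => e; apply: h.
      case: (eqVneq i j) => [ei|h1]; first by rewrite ei in e; exfalso; lra.
      case: (eqVneq i k) => [ei|h2]; first by rewrite ei in e; exfalso; lra.
      by rewrite hv'o.
    case: (Rle_dec (v j - u j) (u k - v k)) => hc.
      exists j; first by rewrite inE; apply/rneqP; lra.
      rewrite inE; apply/negP => /rneqP; apply; rewrite hv'j /eps Rmin_left //; ring.
    exists k; first by rewrite inE; apply/rneqP; lra.
    rewrite inE; apply/negP => /rneqP; apply; rewrite hv'k /eps Rmin_right; [ring|lra].
  - move=> K' hK'.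
    have -> : \big[Rplus/0]_(i < n | (i < K')%N) v' i = \big[Rplus/0]_(i < n | (i < K')%N) v i
        + ((if (k < K')%N then eps else 0) - (if (j < K')%N then eps else 0)).
      rewrite /v' Rsum_plus; congr Rplus.
      rewrite /Rminus Rsum_plus sum_delta; congr Rplus.
      rewrite (eq_bigr (fun i => if i == j then - eps else 0)); last by move=> i _; case: (i == j); [|rewrite Ropp_0].
      rewrite sum_delta; by case: (j < K')%N; rewrite ?Ropp_0.
    case: (ltnP k K') => hkK.
      have -> : (j < K')%N by lia. have := hpre K' hK'; lra.
    case: (ltnP j K') => hjK; last by have := hpre K' hK'; lra.
    rewrite (sum_split_at v hjK) (sum_split_at u hjK).
    have -> : \big[Rplus/0]_(i < n | (j < i)%N && (i < K')%N) v i = \big[Rplus/0]_(i < n | (j < i)%N && (i < K')%N) u i.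
      apply: eq_bigr => i /andP[h1 h2]; apply: hmid => //; lia.
    have := hpre j (ltnW (ltn_ord j)); lra.
Qed.

End Norm.

Definition leR (a b : R) : bool := if Rle_dec b a then true else false.
Lemma leRP a b : reflect (b <= a) (leR a b).
Proof. rewrite /leR; case: (Rle_dec b a) => h; [by constructor|by constructor]. Qed.
Lemma leR_total : total leR.
Proof. move=> a b; case: (Rle_dec a b) => h; [apply/orP; right|apply/orP; left]; apply/leRP; lra. Qed.
Lemma leR_trans : transitive leR.
Proof. move=> b a c /leRP h1 /leRP h2; apply/leRP; lra. Qed.
Lemma leR_refl : reflexive leR.
Proof. move=> a; apply/leRP; lra. Qed.

Section Sort.
Variable n : nat.
Variable x : 'I_n -> R.

Lemma abs_sorted_perm : perm_eq (abs_sorted x) (mktuple (fun i => Rabs (x i))).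
Proof. rewrite /abs_sorted perm_sort /=; exact: perm_refl. Qed.

Lemma size_abs_sorted : size (abs_sorted x) = n.
Proof. by rewrite (perm_size abs_sorted_perm) size_tuple. Qed.

Lemma abs_sorted_sorted : sorted leR (abs_sorted x).
Proof. exact: (sort_sorted leR_total). Qed.

Lemma absx_sigma : exists s : {perm 'I_n}, forall i : 'I_n, absx x i = Rabs (x (s i)).
Proof.
  case/tuple_permP: abs_sorted_perm => s hs; exists s => i.
  by rewrite /absx hs nth_mktuple tnth_mktuple.
Qed.

Lemma absx_ge0 k : 0 <= absx x k.
Proof.
  rewrite /absx; case: (ltnP k n) => hk.
    case: absx_sigma => s hs; have := hs (Ordinal hk); rewrite /absx /= => ->; exact: Rabs_pos.
  rewrite nth_default ?size_abs_sorted //; lra.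
Qed.

Lemma absx_mono i j : (i <= j)%N -> absx x j <= absx x i.
Proof.
  move=> hij; case: (ltnP j n) => hj.
    apply/leRP; rewrite /absx; apply: (sorted_leq_nth leR_trans leR_refl); try exact: abs_sorted_sorted. all: try (rewrite ?inE /= size_abs_sorted; lia). exact: hij.
  rewrite {1}/absx nth_default; last by rewrite size_abs_sorted.
  exact: (absx_ge0 i).
Qed.

End Sort.

Lemma card_perm n (s : {perm 'I_n}) (P : pred 'I_n) : #|[pred i | P (s i)]| = #|[pred i | P i]|.
Proof.
  rewrite -!sum1_card [RHS](reindex_inj (@perm_inj _ s)) /=.
  by apply: eq_bigl => i; rewrite !inE.
Qed.

Lemma card_lt n k : (k <= n)%N -> #|[pred l : 'I_n | (l < k)%N]| = k.
Proof.
  move=> hk; rewrite -sum1_card.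
  have -> : \sum_(i in [pred l : 'I_n | (l < k)%N]) 1 = \sum_(i < n | (i < k)%N) 1 by apply: eq_bigl => i; rewrite inE.
  by rewrite -(big_ord_widen n (fun _ => 1%N)) // sum1_card card_ord.
Qed.

Lemma absx_count n (x : 'I_n -> R) k c : 0 <= c ->
  (#|[pred i | rlt c (Rabs (x i))]| <= k)%N -> absx x k <= c.
Proof.
  move=> hc hcard; apply: Rnot_lt_le => hlt.
  case: (ltnP k n) => hk; last first.
    move: hlt; rewrite /absx nth_default ?size_abs_sorted //; lra.
  case: (absx_sigma x) => s hs.
  have : (#|[pred i | ((s^-1)%g i < k.+1)%N]| <= #|[pred i | rlt c (Rabs (x i))]|)%N.
    apply: subset_leq_card; apply/subsetP => i; rewrite !inE => hi.
    apply/rltP; have := hs ((s^-1)%g i); rewrite permKV => <-.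
    apply: (Rlt_le_trans _ _ _ hlt); apply: absx_mono; lia.
  rewrite (card_perm (s^-1)%g (fun i : 'I_n => (i < k.+1)%N)) card_lt //; lia.
Qed.

Lemma foldl_min (f : nat -> R) r : forall s b, (b < s)%N -> (forall k, (k < s)%N -> f b <= f k) ->
  (forall k, (k < b)%N -> f b < f k) ->
  let b' := foldl (fun best k => if Rlt_dec (f k) (f best) then k else best) b (iota s r) in
  (b' < s + r)%N /\ (forall k, (k < s + r)%N -> f b' <= f k) /\ (forall k, (k < b')%N -> f b' < f k).
Proof.
  elim: r => [|r IH] s b hb h1 h2 /=; first by rewrite addn0.
  rewrite addnS -addSn.
  case: (Rlt_dec (f s) (f b)) => hl.
    apply: IH => //.
    - move=> k hk; case: (ltnP k s) => hks; first by have := h1 k hks; lra.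
      have -> : k = s by lia. lra.
    - move=> k hk; have := h1 k hk; lra.
  apply: IH => //; first lia.
  move=> k hk; case: (ltnP k s) => hks; first by apply: h1.
  have -> : k = s by lia. lra.
Qed.

Section IX.
Variables (n K : nat) (x : 'I_n -> R).
Hypothesis hK1 : (1 < K)%N.
Hypothesis hKn : (K < n)%N.

Notation a := (absx x).
Notation p := (ix K x).
Definition Stail k := \big[Rplus/0]_(k <= j < n) absx x j.

Lemma ix_spec : (p < K)%N /\ (forall k, (k < K)%N -> sx K x p <= sx K x k) /\
   (forall k, (k < p)%N -> sx K x p < sx K x k).
Proof.
  have h1 : forall k, (k < 1)%N -> sx K x 0 <= sx K x k.
    by move=> k hk; (have -> : k = 0%N by lia); lra.
  have h2 : forall k, (k < 0)%N -> sx K x 0 < sx K x k by move=> k hk; lia.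
  have := @foldl_min (sx K x) (K - 1) 1 0 (ltn0Sn 0) h1 h2.
  rewrite /ix /=; have -> : (1 + (K - 1) = K)%N by lia. done.
Qed.

Lemma Stail_ge0 k : 0 <= Stail k.
Proof. apply: Rsum_ge0 => i _; exact: absx_ge0. Qed.

Lemma StailS k : (k < n)%N -> Stail k = a k + Stail k.+1.
Proof. move=> hk; by rewrite /Stail big_ltn. Qed.

Lemma sx_eq k : sx K x k = Stail k / INR (K - k).
Proof. by []. Qed.

Definition m := (K - p)%N.
Lemma m_pos : (0 < m)%N.
Proof. case: ix_spec => h _; rewrite /m; lia. Qed.
Lemma INRm_pos : 0 < INR m.
Proof. apply: lt_0_INR; move: m_pos; lia. Qed.

Lemma delta_eq : delta K x = Stail p / INR m.
Proof. by []. Qed.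

Lemma delta_ge0 : 0 <= delta K x.
Proof. rewrite delta_eq; apply: Rmult_le_pos; [exact: Stail_ge0|apply: Rlt_le; apply: Rinv_0_lt_compat; exact: INRm_pos]. Qed.

Lemma Stail_delta : Stail p = INR m * delta K x.
Proof. rewrite delta_eq; field; have := INRm_pos; lra. Qed.

Lemma F1 : (0 < p)%N -> delta K x < a p.-1.
Proof.
  move=> hp; case: ix_spec => hpK [_ hmin].
  have := hmin p.-1 (ltac:(lia)).
  rewrite !sx_eq (StailS (_ : p.-1 < n)%N); last by lia.
  have -> : p.-1.+1 = p by lia.
  have -> : (K - p.-1 = m.+1)%N by rewrite /m; lia.
  rewrite S_INR delta_eq => h.
  have hm := INRm_pos.
  have hS := Stail_ge0 p. have ha := absx_ge0 x p.-1.
  set S := Stail p in h *. set aa := a p.-1 in h *.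
  have hM1 : 0 < INR m + 1 by lra.
  have h3 := Rmult_lt_compat_r (INR m + 1) _ _ hM1 h.
  have e : (aa + S) / (INR m + 1) * (INR m + 1) = aa + S by field; lra.
  have e2 : S / INR m * (INR m + 1) = S / INR m + S by field; lra.
  rewrite e e2 in h3; lra.
Qed.

Lemma F2 : a p <= delta K x.
Proof.
  case: ix_spec => hpK [hmin _].
  have hm := INRm_pos.
  have ht := StailS (_ : p < n)%N; have ht' := ht (ltac:(lia)).
  case: (ltnP p.+1 K) => hp1.
    have := hmin p.+1 hp1; rewrite !sx_eq delta_eq.
    have -> : (K - p.+1 = m.-1)%N by rewrite /m; lia.
    have hm1 : 0 < INR m.-1 by apply: lt_0_INR; rewrite /m; lia.
    have e : INR m = INR m.-1 + 1 by rewrite -S_INR; congr INR; have := m_pos; lia.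
    rewrite ht' e => h.
    have h' := Rmult_le_compat_r (INR m.-1 * (INR m.-1 + 1)) _ _ (ltac:(nra)) h.
    field_simplify in h'; try lra.
    apply: (Rmult_le_reg_r (INR m.-1 + 1)); first lra.
    rewrite /Rdiv Rmult_assoc Rinv_l; nra.
  have em : m = 1%N by rewrite /m; lia.
  rewrite delta_eq em /= Rdiv_1_r ht'; have := Stail_ge0 p.+1; lra.
Qed.

Lemma tail_le k : (p <= k)%N -> a k <= delta K x.
Proof. move=> h; apply: Rle_trans F2; exact: absx_mono. Qed.

Lemma head_ge k : (k < p)%N -> delta K x <= a k.
Proof. move=> h; apply: Rlt_le; apply: Rlt_le_trans (F1 (ltac:(lia))) _; apply: absx_mono; lia. Qed.

Definition un k := if (k < p)%N then a k else if (k < K)%N then delta K x else 0.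

Lemma u_un (i : 'I_n) : u K x i = un i.
Proof. by []. Qed.

Lemma un_ge0 k : 0 <= un k.
Proof. rewrite /un; case: ifP => _; first exact: absx_ge0. case: ifP => _; [exact: delta_ge0|lra]. Qed.

Lemma un_mono i j : (i <= j)%N -> un j <= un i.
Proof.
  move=> hij; rewrite /un.
  case: (ltnP i p) => hi.
    case: (ltnP j p) => hj; first exact: absx_mono.
    have := head_ge hi; have := delta_ge0; case: ifP => _; lra.
  have -> : (j < p)%N = false by apply/negbTE; rewrite -leqNgt; lia.
  case: (ltnP i K) => hiK.
    have := delta_ge0; case: ifP => _; lra.
  have -> : (j < K)%N = false by apply/negbTE; rewrite -leqNgt; lia.
  lra.
Qed.

End IX.

Lemma Rsum_opp (I : Type) (r : seq I) (P : pred I) (F : I -> R) :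
  \big[Rplus/0]_(i <- r | P i) (- F i) = - \big[Rplus/0]_(i <- r | P i) F i.
Proof. apply: (big_ind2 (fun a b => a = - b)); [ring| move=> ? ? ? ? -> ->; ring | by []]. Qed.

Lemma sum_const (I : finType) (P : pred I) c :
  \big[Rplus/0]_(i | P i) c = INR #|[pred i | P i]| * c.
Proof.
  rewrite -sum1_card.
  have -> : \sum_(i in [pred i | P i]) 1 = \sum_(i | P i) 1 by apply: eq_bigl => i; rewrite inE.
  apply: (big_ind2 (fun (a : R) (b : nat) => a = INR b * c)).
  - by rewrite /= Rmult_0_l.
  - move=> a1 b1 a2 b2 -> ->; rewrite plus_INR; ring.
  - move=> i _ /=; ring.
Qed.

Lemma sum_const_nat a b c : \big[Rplus/0]_(a <= i < b) c = INR (b - a) * c.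
Proof.
  rewrite big_const_nat; elim: (b - a)%N => [|k IH]; first by rewrite /=; ring.
  rewrite iterS IH S_INR; ring.
Qed.

Lemma W_lemma n (b : nat -> R) (t : {perm 'I_n}) k : (k <= n)%N ->
  (forall i j, (i <= j)%N -> b j <= b i) ->
  \big[Rplus/0]_(i < n | (i < k)%N) b (t i) <= \big[Rplus/0]_(i < n | (i < k)%N) b i.
Proof.
  move=> hk hb.
  case: k hk => [|k] hk; first by rewrite !big_pred0 //; lra.
  rewrite (reindex_inj (@perm_inj _ (t^-1)%g)) /=.
  have e : forall i, b (t ((t^-1)%g i)) = b i by move=> i; rewrite permKV.
  rewrite (eq_bigr (fun i : 'I_n => b i)); last by move=> i _; rewrite e.
  set c := b k.
  rewrite (big_mkcond (fun i : 'I_n => (t^-1)%g i < k.+1)%N) (big_mkcond (fun i : 'I_n => (i < k.+1)%N)) /=.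
  have H : forall i : 'I_n, (if ((t^-1)%g i < k.+1)%N then b i else 0) - (if (i < k.+1)%N then b i else 0)
       <= (if ((t^-1)%g i < k.+1)%N then c else 0) - (if (i < k.+1)%N then c else 0).
    move=> i; case: (ltnP i k.+1) => h1; case: (ltnP ((t^-1)%g i) k.+1) => h2; try lra.
      have := hb i k (ltac:(lia)); rewrite /c; lra.
    have := hb k i (ltac:(lia)); rewrite /c; lra.
  have := @Rsum_le _ (index_enum 'I_n) (fun _ => true) _ _ (fun i _ => H i).
  rewrite /Rminus !Rsum_plus !Rsum_opp.
  have E1 : \big[Rplus/0]_(i < n) (if ((t^-1)%g i < k.+1)%N then c else 0) = INR k.+1 * c.
    rewrite -big_mkcond sum_const (card_perm (t^-1)%g (fun i : 'I_n => (i < k.+1)%N)) card_lt //.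
  have E2 : \big[Rplus/0]_(i < n) (if (i < k.+1)%N then c else 0) = INR k.+1 * c.
    rewrite -big_mkcond sum_const card_lt //.
  rewrite E1 E2 => h. set A := \big[Rplus/0]_(i < n) (if ((t^-1)%g i < k.+1)%N then b i else 0) in h *. set B := \big[Rplus/0]_(i < n) (if (i < k.+1)%N then b i else 0) in h *. lra.
Qed.

Lemma Rsum_le_nat a b (F G : nat -> R) :
  (forall i, (a <= i < b)%N -> F i <= G i) ->
  \big[Rplus/0]_(a <= i < b) F i <= \big[Rplus/0]_(a <= i < b) G i.
Proof. move=> h; rewrite big_nat_cond [X in _ <= X]big_nat_cond; apply: Rsum_le => i /andP[hi _]; exact: h. Qed.

Lemma perm_bij n (s : {perm 'I_n}) : bijective s.
Proof. by exists (s^-1)%g; [exact: permK|exact: permKV]. Qed.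

Lemma card_nz_rlt n (z : 'I_n -> R) : card_nz z = #|[pred i | rlt 0 (Rabs (z i))]|.
Proof.
  rewrite /card_nz; apply: eq_card => i; rewrite !inE.
  case: (Req_EM_T (z i) 0) => h /=.
    apply/esym/negbTE/rltP; rewrite h Rabs_R0; lra.
  apply/esym/rltP; exact: Rabs_pos_lt.
Qed.

Section LB.
Variables (n K : nat) (Ns : ('I_n -> R) -> R).
Hypothesis hK1 : (1 < K)%N.
Hypothesis hKn : (K < n)%N.
Hypothesis hN : is_norm Ns.
Hypothesis hS : sign_invariant Ns.
Hypothesis hP : perm_invariant Ns.

Lemma N_absx z : Ns (fun i => absx z i) = Ns z.
Proof.
  case: (absx_sigma z) => s hs.
  rewrite (N_ext hS (g := fun i => Rabs (z (s i)))) // N_abs // N_perm //; exact: perm_bij.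
Qed.

Lemma sparse_zero (z : 'I_n -> R) : (card_nz z <= K)%N -> forall k, (K <= k)%N -> absx z k = 0.
Proof.
  move=> hz k hk; apply: Rle_antisym; last exact: absx_ge0.
  apply: absx_count; first lra.
  rewrite -card_nz_rlt; lia.
Qed.

Variables (x : 'I_n -> R) (M : nat) (l : 'I_M -> R) (z : 'I_M -> 'I_n -> R).
Hypothesis hl : forall j, 0 <= l j.
Hypothesis hl1 : \big[Rplus/0]_(j < M) l j = 1.
Hypothesis hz : forall j, (card_nz (z j) <= K)%N.
Hypothesis hx : forall i, x i = \big[Rplus/0]_(j < M) (l j * z j i).

Lemma topk k : (k <= n)%N ->
  \big[Rplus/0]_(i < k) absx x i <= \big[Rplus/0]_(j < M) (l j * \big[Rplus/0]_(i < k) absx (z j) i).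
Proof.
  move=> hk.
  case: (absx_sigma x) => s hs.
  rewrite (big_ord_widen n (absx x) hk).
  under eq_bigr => i _ do rewrite hs.
  under [X in _ <= X]eq_bigr => j _ do rewrite (big_ord_widen n (absx (z j)) hk).
  apply: Rle_trans.
    apply: (@Rsum_le _ _ _ _ (fun i => \big[Rplus/0]_(j < M) (l j * Rabs (z j (s i))))) => i _.
    rewrite hx; apply: Rle_trans; first exact: Rsum_abs.
    right; apply: eq_bigr => j _; rewrite Rabs_mult Rabs_pos_eq //.
  rewrite exchange_big /=; apply: Rsum_le => j _.
  rewrite -Rsum_distr; apply: Rmult_le_compat_l => //.
  case: (absx_sigma (z j)) => r hr.
  have e : forall i, Rabs (z j (s i)) = absx (z j) (((s * r^-1)%g) i).
    by move=> i; rewrite hr permM permKV.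
  under eq_bigr => i _ do rewrite e.
  exact: (@W_lemma n (absx (z j)) (s / r)%g k hk (fun i1 i2 h => absx_mono (z j) h)).
Qed.

Definition vn k := \big[Rplus/0]_(j < M) (l j * absx (z j) k).

Lemma vn_mono i j : (i <= j)%N -> vn j <= vn i.
Proof. move=> h; apply: Rsum_le => k _; apply: Rmult_le_compat_l => //; exact: absx_mono. Qed.

Lemma vn_ge0 i : 0 <= vn i.
Proof. apply: Rsum_ge0 => k _; apply: Rmult_le_pos => //; exact: absx_ge0. Qed.

Lemma vn_zero i : (K <= i)%N -> vn i = 0.
Proof. move=> h; rewrite /vn big1 // => j _; rewrite sparse_zero //; ring. Qed.

Lemma V_eq k : \big[Rplus/0]_(i < k) vn i = \big[Rplus/0]_(j < M) (l j * \big[Rplus/0]_(i < k) absx (z j) i).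
Proof. rewrite /vn exchange_big /=; apply: eq_bigr => j _; by rewrite Rsum_distr. Qed.

Lemma topV k : (k <= n)%N -> \big[Rplus/0]_(i < k) absx x i <= \big[Rplus/0]_(i < k) vn i.
Proof. move=> hk; rewrite V_eq; exact: topk. Qed.


Lemma ord_to_nat (f : nat -> R) k : \big[Rplus/0]_(i < k) f i = \big[Rplus/0]_(0 <= i < k) f i.
Proof. by rewrite big_mkord. Qed.

Lemma prefix_nat k : (k <= n)%N ->
  \big[Rplus/0]_(i < k) un K x i <= \big[Rplus/0]_(i < k) vn i.
Proof.
  move=> hk.
  case: (ix_spec x hK1 hKn) => hpK _.
  set p := ix K x.
  set d := delta K x.
  have hd0 : 0 <= d := delta_ge0 x hK1 hKn.
  set A := \big[Rplus/0]_(i < p) absx x i.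
  have hAn : \big[Rplus/0]_(i < n) absx x i = A + INR (m K x) * d.
    have hpn : (p <= n)%N by lia.
    by rewrite -(Stail_delta x hK1 hKn) /Stail /A !ord_to_nat (big_cat_nat (leq0n p) hpn).
  set V := fun k => \big[Rplus/0]_(i < k) vn i.
  have hVn : V n >= A + INR (m K x) * d by rewrite -hAn /V; apply: Rle_ge; exact: (topV (leqnn n)).
  have hVp : V p >= A by rewrite /V; apply: Rle_ge; apply: topV; lia.
  have hVK : V K = V n.
    rewrite /V !ord_to_nat (big_cat_nat (leq0n K) (ltnW hKn)) /= [X in _ + X]big1_seq ?Rplus_0_r //.
    move=> i /andP[_]; rewrite mem_index_iota => /andP[hi _]; exact: vn_zero.
  case: (leqP k p) => hkp.
    rewrite (eq_bigr (fun i : 'I_k => absx x i)); first exact: (topV hk).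
    move=> i _; rewrite /un; have -> : (i < p)%N by have := ltn_ord i; lia. done.
  have hU : forall k', (p <= k')%N -> \big[Rplus/0]_(i < k') un K x i = A + \big[Rplus/0]_(p <= i < k') (if (i < K)%N then d else 0).
    move=> k' hk'; rewrite ord_to_nat (big_cat_nat (leq0n p) hk') /= /A ord_to_nat; congr Rplus.
      by apply: eq_big_nat => i /andP[_ hi]; rewrite /un hi.
    by apply: eq_big_nat => i /andP[hi _]; rewrite /un (_ : (i < p)%N = false) //; apply/negbTE; rewrite -leqNgt.
  case: (leqP k K) => hkK.
    rewrite hU; last lia.
    rewrite (eq_big_nat _ _ (F2 := fun _ => d)); last by move=> i /andP[_ hi]; rewrite (_ : (i < K)%N) //; lia.
    rewrite sum_const_nat.
    set q := INR (k - p). set r := INR (K - k).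
    have hq : 0 <= q by apply: pos_INR.
    have hr : 0 <= r by apply: pos_INR.
    have hmqr : INR (m K x) = q + r by rewrite /q /r -plus_INR /m; congr INR; lia.
    have hmpos : 0 < q + r by rewrite -hmqr; exact: INRm_pos.
    (* concavity *)
    set vk := vn k.
    have c1 : V k - V p >= q * vk.
      rewrite /V !ord_to_nat (big_cat_nat (leq0n p) (ltnW hkp)) /=.
      have : \big[Rplus/0]_(p <= i < k) vk <= \big[Rplus/0]_(p <= i < k) vn i.
        apply: Rsum_le_nat => i /andP[_ hi]; apply: vn_mono; lia.
      rewrite sum_const_nat -/q; lra.
    have c2 : V K - V k <= r * vk.
      rewrite /V !ord_to_nat (big_cat_nat (leq0n k) hkK) /=.
      have : \big[Rplus/0]_(k <= i < K) vn i <= \big[Rplus/0]_(k <= i < K) vk.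
        apply: Rsum_le_nat => i /andP[hi _]; apply: vn_mono; lia.
      rewrite sum_const_nat -/r; lra.
    have hvk : 0 <= vk by apply: vn_ge0.
    have c3 : r * (V k - V p) >= q * (V K - V k).
      have := Rmult_le_compat_l r _ _ hr (Rge_le _ _ c1).
      have := Rmult_le_compat_l q _ _ hq c2. nra.
    rewrite hVK in c3; rewrite hmqr in hVn.
    change (A + q * d <= V k).
    have : (q + r) * (V k - (A + q * d)) >= 0 by nra.
    move=> h; apply: Rnot_lt_le => hlt.
    have : (q + r) * (V k - (A + q * d)) < 0 by apply: Rmult_pos_neg; lra.
    lra.
  rewrite hU; last lia.
  rewrite (big_cat_nat (ltnW hpK) (ltnW hkK)) /=.
  rewrite (eq_big_nat _ _ (F2 := fun _ => d)); last by move=> i /andP[_ hi]; rewrite hi.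
  rewrite [X in _ + (_ + X)]big1_seq; last first.
    move=> i /andP[_]; rewrite mem_index_iota => /andP[hi _]; rewrite (_ : (i < K)%N = false) //; apply/negbTE; rewrite -leqNgt //.
  rewrite sum_const_nat Rplus_0_r.
  have -> : \big[Rplus/0]_(i < k) vn i = V n.
    rewrite /V !ord_to_nat (big_cat_nat (leq0n k) hk) /= [X in _ + X]big1_seq ?Rplus_0_r //.
    move=> i /andP[_]; rewrite mem_index_iota => /andP[hi _]; apply: vn_zero; lia.
  rewrite /m in hVn; lra.
Qed.

Lemma LB_main : Ns (u K x) <= \big[Rplus/0]_(j < M) (l j * Ns (z j)).
Proof.
  apply: Rle_trans (_ : Ns (fun i => vn i) <= _).
    apply: (N_major hN hS hP).
    - move=> i; exact: (un_ge0 x hK1 hKn).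
    - move=> i j hij; exact: (un_mono x hK1 hKn hij).
    - move=> k hk.
      rewrite -(big_ord_widen n (un K x) hk) -(big_ord_widen n (vn) hk).
      exact: prefix_nat.
  apply: Rle_trans; first exact: (N_sum hN hS (fun j i => absx (z j) i) hl).
  right; apply: eq_bigr => j _; by rewrite N_absx.
Qed.

End LB.

Lemma conv_single n (S : ('I_n -> R) -> Prop) y : S y -> conv S y.
Proof.
  move=> hy; exists 1%N, (fun _ => 1), (fun _ => y); split; [move=> _; lra|split].
    by rewrite /Rsum big_ord1.
  split => // i; by rewrite /Rsum big_ord1 Rmult_1_l.
Qed.

Lemma conv_ext n (S : ('I_n -> R) -> Prop) y y' : (forall i, y i = y' i) -> conv S y -> conv S y'.
Proof. move=> e [M [l [p [h1 [h2 [h3 h4]]]]]]; exists M, l, p; do 3 (split => //); move=> i; by rewrite -e. Qed.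

Lemma conv_mix n (S : ('I_n -> R) -> Prop) a b mu : 0 <= mu <= 1 -> conv S a -> conv S b ->
  conv S (fun i => mu * a i + (1 - mu) * b i).
Proof.
  move=> hmu [M1 [l1 [p1 [h11 [h12 [h13 h14]]]]]] [M2 [l2 [p2 [h21 [h22 [h23 h24]]]]]].
  exists (M1 + M2)%N.
  exists (fun j => match split j with inl j1 => mu * l1 j1 | inr j2 => (1 - mu) * l2 j2 end).
  exists (fun j => match split j with inl j1 => p1 j1 | inr j2 => p2 j2 end).
  have sl : forall j1 : 'I_M1, split (lshift M2 j1) = inl j1 by move=> j1; rewrite -[lshift _ _]/(unsplit (inl j1)) unsplitK.
  have sr : forall j2 : 'I_M2, split (rshift M1 j2) = inr j2 by move=> j2; rewrite -[rshift _ _]/(unsplit (inr j2)) unsplitK.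
  split; first by move=> j; case: split => j'; apply: Rmult_le_pos => //; lra.
  split.
    rewrite /Rsum big_split_ord /=.
    rewrite (eq_bigr (fun j => mu * l1 j)); last by move=> j _; rewrite sl.
    rewrite [X in _ + X](eq_bigr (fun j => (1 - mu) * l2 j)); last by move=> j _; rewrite sr.
    rewrite -!Rsum_distr; move: h12 h22; rewrite /Rsum => -> ->; ring.
  split; first by move=> j; case: split.
  move=> i; rewrite h14 h24 /Rsum [RHS]big_split_ord /= !Rsum_distr; congr Rplus; apply: eq_bigr => j _; rewrite ?sl ?sr; ring.
Qed.

Definition Good n (m : nat) (d : R) (w : 'I_n -> R) : Prop :=
  (forall i, 0 <= w i <= d) /\ (#|[pred i | rneq (w i) 0]| <= m)%N.

Definition frac n (d : R) (c : 'I_n -> R) := [pred i | rlt 0 (c i) && rlt (c i) d].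

Lemma hyper_base n (m : nat) (d : R) (c : 'I_n -> R) : 0 <= d ->
  (forall i, 0 <= c i <= d) -> \big[Rplus/0]_i c i <= INR m * d ->
  (#|frac d c| <= 1)%N -> Good m d c.
Proof.
  move=> hd hc hs hF; split => //.
  case: (Req_EM_T d 0) => hd0.
    rewrite (_ : #|_| = 0%N) //; apply: eq_card0 => i; rewrite !inE.
    apply/negbTE/negP => /rneqP h; apply: h; have := hc i; lra.
  have hdp : 0 < d by lra.
  set E := [pred i | Reqb (c i) d].
  have hsub : (#|[pred i | rneq (c i) 0]| <= #|E| + #|frac d c|)%N.
    rewrite -cardUI; apply: leq_trans (leq_addr _ _); apply: subset_leq_card; apply/subsetP => i.
    rewrite !inE => /rneqP hi; have := hc i => hci.
    case: (Req_EM_T (c i) d) => e; first by apply/orP; left; apply/ReqbP.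
    apply/orP; right; apply/andP; split; apply/rltP; lra.
  have hsplit : \big[Rplus/0]_i c i = INR #|E| * d + \big[Rplus/0]_(i | ~~ E i) c i.
    rewrite (bigID E) /=; congr Rplus.
    rewrite (eq_bigr (fun _ => d)); last by move=> i /ReqbP.
    rewrite sum_const; congr (INR _ * _); apply: eq_card => i; by rewrite !inE.
  have hrest : 0 <= \big[Rplus/0]_(i | ~~ E i) c i by apply: Rsum_ge0 => i _; have := hc i; lra.
  have hE : (#|E| <= m)%N.
    have : INR #|E| * d <= INR m * d by lra.
    move=> h; apply/leP; apply: INR_le; apply: (Rmult_le_reg_r d) => //.
  case: (posnP #|frac d c|) => hF0.
    move: hsub; rewrite hF0 addn0 => h; exact: leq_trans h hE.
  case/card_gt0P: hF0 => e he.
  move: he; rewrite inE => /andP[/rltP he1 /rltP he2].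
  have hEe : ~~ E e by rewrite inE; apply/negP => /ReqbP; lra.
  have : c e <= \big[Rplus/0]_(i | ~~ E i) c i.
    rewrite (bigD1 e) //=; apply: (Rle_trans _ (c e + 0)); first lra.
    apply: Rplus_le_compat_l; apply: Rsum_ge0 => i _; have := hc i; lra.
  move=> hce.
  have hE2 : (#|E| < m)%N.
    have : INR #|E| * d < INR m * d by lra.
    move=> h; apply/ltP; apply: INR_lt; apply: (Rmult_lt_reg_r d) => //.
  apply: leq_trans hsub _; lia.
Qed.

Lemma hyper n (m : nat) (d : R) : 0 <= d ->
  forall c : 'I_n -> R, (forall i, 0 <= c i <= d) -> \big[Rplus/0]_i c i <= INR m * d ->
  conv (Good m d) c.
Proof.
  move=> hd.
  suff H : forall N (c : 'I_n -> R), (#|frac d c| <= N)%N -> (forall i, 0 <= c i <= d) ->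
      \big[Rplus/0]_i c i <= INR m * d -> conv (Good m d) c.
    by move=> c; apply: H.
  move=> N0; elim: N0 => [|N IH] c hN hc hs.
    by apply: (@conv_single n (Good m d)); apply: hyper_base => //; lia.
  case: (leqP #|frac d c| 1) => hF1.
    by apply: (@conv_single n (Good m d)); apply: hyper_base.
  have [i1 hi1] : exists i1, i1 \in frac d c by apply/card_gt0P; exact: leq_trans _ hF1.
  have [i2 hi2 hne] : exists2 i2, i2 \in frac d c & i2 != i1.
    apply: NNPP => hno.
    have : (#|frac d c| <= #|pred1 i1|)%N.
      apply: subset_leq_card; apply/subsetP => i hi; rewrite inE; apply/negPn/negP => hh.
      by apply: hno; exists i.
    rewrite card1; lia.
  move: (hi1) (hi2); rewrite !inE => /andP[/rltP a1 /rltP b1] /andP[/rltP a2 /rltP b2].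
  have hne' : i1 != i2 by rewrite eq_sym.
  set al := Rmin (d - c i1) (c i2).
  set be := Rmin (c i1) (d - c i2).
  have hal : 0 < al by apply: Rmin_glb_lt; lra.
  have hbe : 0 < be by apply: Rmin_glb_lt; lra.
  have al1 : al <= d - c i1 by apply: Rmin_l.
  have al2 : al <= c i2 by apply: Rmin_r.
  have be1 : be <= c i1 by apply: Rmin_l.
  have be2 : be <= d - c i2 by apply: Rmin_r.
  pose cp := fun i => c i + ((if i == i1 then al else 0) - (if i == i2 then al else 0)).
  pose cm := fun i => c i + ((if i == i2 then be else 0) - (if i == i1 then be else 0)).
  have sum_dd : forall (v w : R) (k1 k2 : 'I_n), \big[Rplus/0]_i ((if i == k1 then v else 0) - (if i == k2 then w else 0)) = v - w.
    move=> v w k1 k2; rewrite /Rminus Rsum_plus Rsum_opp !sum_delta //.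
  have hsp : \big[Rplus/0]_i cp i = \big[Rplus/0]_i c i.
    by rewrite /cp Rsum_plus sum_dd; ring.
  have hsm : \big[Rplus/0]_i cm i = \big[Rplus/0]_i c i.
    by rewrite /cm Rsum_plus sum_dd; ring.
  have hcp : forall i, 0 <= cp i <= d.
    move=> i; rewrite /cp; case: (eqVneq i i1) => [->|h1].
      rewrite (negbTE hne'); lra.
    case: (eqVneq i i2) => [->|h2]; first lra.
    have := hc i; lra.
  have hcm : forall i, 0 <= cm i <= d.
    move=> i; rewrite /cm; case: (eqVneq i i1) => [->|h1].
      rewrite (negbTE hne'); lra.
    case: (eqVneq i i2) => [->|h2]; first lra.
    have := hc i; lra.
  have fracsub : forall c', (forall i, i != i1 -> i != i2 -> c' i = c i) -> (i1 \notin frac d c') \/ (i2 \notin frac d c') ->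
      (#|frac d c'| <= N)%N.
    move=> c' hc' hout.
    rewrite -ltnS; apply: leq_trans hN; apply: proper_card; apply/properP; split.
      apply/subsetP => i; case: (eqVneq i i1) => [->|h1] //; case: (eqVneq i i2) => [->|h2] //.
      by rewrite !inE hc'.
    case: hout => hout; [by exists i1|by exists i2].
  have IHp : conv (Good m d) cp.
    apply: IH => //; last by rewrite hsp.
    apply: fracsub; first by move=> i h1 h2; rewrite /cp (negbTE h1) (negbTE h2); ring.
    case: (Rle_dec (d - c i1) (c i2)) => hc12.
      left; rewrite inE /cp eqxx (negbTE hne') /al Rmin_left //.
      apply/negP => /andP[_ /rltP]; lra.
    right; rewrite inE /cp eq_sym (negbTE hne') eqxx /al Rmin_right; last lra.
    apply/negP => /andP[/rltP]; lra.
  have IHm : conv (Good m d) cm.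
    apply: IH => //; last by rewrite hsm.
    apply: fracsub; first by move=> i h1 h2; rewrite /cm (negbTE h1) (negbTE h2); ring.
    case: (Rle_dec (c i1) (d - c i2)) => hc12.
      left; rewrite inE /cm eqxx (negbTE hne') /be Rmin_left //.
      apply/negP => /andP[/rltP]; lra.
    right; rewrite inE /cm eqxx (negbTE hne) /be Rmin_right; last lra.
    apply/negP => /andP[_ /rltP]; lra.
  set mu := be / (al + be).
  have hmu : 0 <= mu <= 1.
    rewrite /mu; split.
      apply: Rmult_le_pos; [lra|apply: Rlt_le; apply: Rinv_0_lt_compat; lra].
    apply: (Rmult_le_reg_r (al + be)); first lra.
    rewrite Rmult_1_l /Rdiv Rmult_assoc Rinv_l; lra.
  apply: conv_ext (conv_mix hmu IHp IHm) => i.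
  rewrite /cp /cm /mu.
  case: (eqVneq i i1) => [->|h1].
    rewrite (negbTE hne'); field; lra.
  case: (eqVneq i i2) => [->|h2]; first by field; lra.
  field; lra.
Qed.

Lemma conv_map n (S S' : ('I_n -> R) -> Prop) (h s : 'I_n -> R) (pi : 'I_n -> 'I_n) c :
  conv S c -> (forall w, S w -> S' (fun i => h i + s i * w (pi i))) ->
  conv S' (fun i => h i + s i * c (pi i)).
Proof.
  move=> [M [l [q [h1 [h2 [h3 h4]]]]]] hS.
  exists M, l, (fun j i => h i + s i * q j (pi i)); split => //; split => //; split.
    by move=> j; apply: hS.
  move=> i; rewrite h4 /Rsum.
  rewrite [RHS](eq_bigr (fun j => h i * l j + s i * (l j * q j (pi i)))); last by move=> j _; ring.
  rewrite Rsum_plus -!Rsum_distr.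
  move: h2; rewrite /Rsum => ->; rewrite Rmult_1_r; congr (_ + _ * _); by apply: eq_bigr.
Qed.

Section UB.
Variables (n K : nat) (Ns : ('I_n -> R) -> R).
Hypothesis hK1 : (1 < K)%N.
Hypothesis hKn : (K < n)%N.
Hypothesis hN : is_norm Ns.
Hypothesis hS : sign_invariant Ns.
Hypothesis hP : perm_invariant Ns.
Variable x : 'I_n -> R.
Variable sg : {perm 'I_n}.
Hypothesis hsg : forall i : 'I_n, absx x i = Rabs (x (sg i)).

Notation p := (ix K x).
Notation d := (delta K x).
Notation a := (absx x).

Definition y (l : 'I_n) := x (sg l).
Definition sgn (l : 'I_n) := if Rlt_dec (y l) 0 then -1 else 1.
Definition zp (w : 'I_n -> R) (l : 'I_n) := if (l < p)%N then y l else sgn l * w l.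

Lemma abs_zp w (hw : forall i, 0 <= w i) l : Rabs (zp w l) = if (l < p)%N then a l else w l.
Proof.
  rewrite /zp; case: ifP => _; first by rewrite hsg.
  rewrite Rabs_mult (Rabs_pos_eq (w l)) //; rewrite /sgn; case: (Rlt_dec (y l) 0) => ?;
  rewrite ?Rabs_Ropp Rabs_R1; ring.
Qed.

Lemma count_zp w (hw : Good (m K x) d w) th : 0 <= th ->
  (#|[pred l | rlt th (Rabs (zp w l))]| <=
   #|[pred l : 'I_n | (l < p)%N && rlt th (a l)]| + #|[pred l : 'I_n | (p <= l)%N && rlt th (w l)]|)%N.
Proof.
  move=> hth; case: hw => hw1 _.
  rewrite -cardUI; apply: leq_trans (leq_addr _ _); apply: subset_leq_card; apply/subsetP => l.
  rewrite !inE abs_zp; last by move=> i; case: (hw1 i).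
  case: ltnP => hl h; apply/orP; [left|right]; by rewrite ?hl ?h.
Qed.

Lemma zp_bound w (hw : Good (m K x) d w) : Ns (zp w) <= Ns (u K x).
Proof.
  have hw1 := hw.1.
  case: (ix_spec x hK1 hKn) => hpK _.
  rewrite -N_absx //; apply: (N_mono hN hS) => i.
  rewrite u_un (Rabs_pos_eq (un _ _ _)); last exact: un_ge0.
  rewrite Rabs_pos_eq; last exact: absx_ge0.
  apply: absx_count; first exact: un_ge0.
  apply: leq_trans (count_zp hw (un_ge0 x hK1 hKn i)) _.
  rewrite /un; case: (ltnP i p) => hip.
    have e2 : #|[pred l : 'I_n | (p <= l)%N && rlt (a i) (w l)]| = 0%N.
      apply: eq_card0 => l; rewrite !inE; apply/negbTE/negP => /andP[_ /rltP].
      have := head_ge hK1 hKn hip; have := hw1 l; lra.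
    rewrite e2 addn0; apply: leq_trans (_ : #|[pred l : 'I_n | (l < i)%N]| <= i)%N; last by rewrite card_lt // ltnW.
    apply: subset_leq_card; apply/subsetP => l.
    rewrite !inE => /andP[_ /rltP h]; rewrite ltnNge; apply/negP => hil.
    have := absx_mono x hil; lra.
  case: (ltnP i K) => hiK.
    have e2 : #|[pred l : 'I_n | (p <= l)%N && rlt d (w l)]| = 0%N.
      apply: eq_card0 => l; rewrite !inE; apply/negbTE/negP => /andP[_ /rltP].
      have := hw1 l; lra.
    rewrite e2 addn0; apply: leq_trans (_ : #|[pred l : 'I_n | (l < p)%N]| <= i)%N.
      by apply: subset_leq_card; apply/subsetP => l; rewrite !inE => /andP[].
    rewrite card_lt //; lia.
  apply: leq_trans (_ : (p + m K x <= i)%N); last by rewrite /m; lia.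
  apply: leq_add.
    apply: leq_trans (_ : #|[pred l : 'I_n | (l < p)%N]| <= p)%N.
      by apply: subset_leq_card; apply/subsetP => l; rewrite !inE => /andP[].
    rewrite card_lt //; lia.
  apply: leq_trans hw.2; apply: subset_leq_card; apply/subsetP => l; rewrite !inE => /andP[_ /rltP h].
  apply/rneqP; lra.
Qed.

Lemma zp_card w (hw : Good (m K x) d w) : (#|[pred l | rlt 0 (Rabs (zp w l))]| <= K)%N.
Proof.
  case: (ix_spec x hK1 hKn) => hpK _.
  apply: leq_trans (count_zp hw (Rle_refl 0)) _.
  apply: leq_trans (_ : (p + m K x <= K)%N); last by rewrite /m; lia.
  apply: leq_add.
    apply: leq_trans (_ : #|[pred l : 'I_n | (l < p)%N]| <= p)%N.
      by apply: subset_leq_card; apply/subsetP => l; rewrite !inE => /andP[].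
    rewrite card_lt //; lia.
  apply: leq_trans hw.2; apply: subset_leq_card; apply/subsetP => l; rewrite !inE => /andP[_ /rltP h].
  apply/rneqP; lra.
Qed.


Lemma UB_main t : 0 < t -> Ns (u K x) <= t -> conv (NK K Ns) (fun i => x i / t).
Proof.
  move=> ht hut.
  case: (ix_spec x hK1 hKn) => hpK _.
  have hd0 := delta_ge0 x hK1 hKn.
  pose c := fun l : 'I_n => if (l < p)%N then 0 else a l.
  have hc : forall l, 0 <= c l <= d.
    move=> l; rewrite /c; case: ltnP => h; first lra.
    split; [exact: absx_ge0|exact: tail_le].
  have hsum : \big[Rplus/0]_l c l <= INR (m K x) * d.
    rewrite -(Stail_delta x hK1 hKn); right.
    have -> : \big[Rplus/0]_l c l = \big[Rplus/0]_(0 <= k < n) (if (k < p)%N then 0 else a k) by rewrite big_mkord.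
    have hpn : (p <= n)%N by lia.
    rewrite (big_cat_nat (leq0n p) hpn) /= big1_seq; last first.
      by move=> k /andP[_]; rewrite mem_index_iota => /andP[_ ->].
    rewrite Rplus_0_l /Stail; apply: eq_big_nat => k /andP[hk _].
    by rewrite ltnNge hk.
  have hconv := hyper hd0 hc hsum.
  pose pi := (sg^-1)%g.
  pose h := fun i => / t * (if (pi i < p)%N then y (pi i) else 0).
  pose s := fun i => / t * (if (pi i < p)%N then 0 else sgn (pi i)).
  apply: conv_ext (conv_map (h := h) (s := s) (pi := pi) hconv _).
    move=> i; rewrite /h /s /c /pi; case: ltnP => hl.
      rewrite /y permKV; field; lra.
    rewrite hsg /sgn /y permKV; case: (Rlt_dec (x i) 0) => hx0 /=.
      rewrite Rabs_left //; field; lra.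
    rewrite Rabs_pos_eq; [field|]; lra.
  move=> w hw.
  have e : forall i, h i + s i * w (pi i) = / t * zp w (pi i).
    by move=> i; rewrite /h /s /zp; case: ifP => _; ring.
  split.
    rewrite (N_ext hS (g := fun i => / t * zp w (pi i))) // N_scale //.
    rewrite (N_perm hP (zp w)); last exact: perm_bij.
    rewrite Rabs_pos_eq; last by apply: Rlt_le; apply: Rinv_0_lt_compat.
    have := zp_bound hw.
    move=> hb; apply: (Rmult_le_reg_l t) => //.
    rewrite -Rmult_assoc Rinv_r; last lra.
    lra.
  rewrite card_nz_rlt.
  rewrite (eq_card (B := [pred i | rlt 0 (Rabs (zp w (pi i)))])); last first.
    move=> i; rewrite !inE e Rabs_mult Rabs_pos_eq; last by apply: Rlt_le; apply: Rinv_0_lt_compat.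
    have hti : 0 < / t by apply: Rinv_0_lt_compat.
    apply/rltP/rltP => hh; first by apply: (Rmult_lt_reg_l (/ t)) => //; lra.
    by apply: Rmult_lt_0_compat.
  rewrite (card_perm pi (fun l => rlt 0 (Rabs (zp w l)))).
  exact: zp_card hw.
Qed.

End UB.



Theorem mainTheorem6 (n K : nat) (Ns : ('I_n -> R) -> R) :
  (1 < K)%N -> (K < n)%N ->
  is_norm Ns -> sign_invariant Ns -> perm_invariant Ns ->
  forall x : 'I_n -> R,
    is_gauge (conv (NK K Ns)) x (Ns (u K x)).
Proof.
  move=> hK1 hKn hN hS hP x.
  case: (absx_sigma x) => sg hsg.
  have hg0 := N_ge0 hN hS (u K x).
  split.
  - move=> t ht [M [l [q [hl [hl1 [hq hx]]]]]].
    have hz : forall j, (card_nz (fun i => (t * q j i)%R) <= K)%N.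
      move=> j; rewrite card_nz_rlt; have := (hq j).2; rewrite card_nz_rlt => h.
      rewrite (eq_card (B := [pred i | rlt 0 (Rabs (q j i))])) // => i; rewrite !inE Rabs_mult (Rabs_pos_eq t); last lra.
      apply/rltP/rltP => hh; [apply: (Rmult_lt_reg_l t); lra | apply: Rmult_lt_0_compat; lra].
    have hx' : forall i, x i = \big[Rplus/0]_(j < M) (l j * (fun i => t * q j i) i)%R.
      move=> i; have := hx i; rewrite /Rsum => h.
      have -> : x i = (t * (x i / t))%R by field; lra.
      rewrite h Rsum_distr; apply: eq_bigr => j _; ring.
    apply: Rle_trans (LB_main hK1 hKn hN hS hP hl hz hx') _.
    apply: Rle_trans (_ : \big[Rplus/0]_(j < M) (t * l j)%R <= _)%R.
      apply: Rsum_le => j _.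
      rewrite N_scale // Rabs_pos_eq; last lra.
      have := (hq j).1 => h3; apply: (Rle_trans _ (l j * (t * 1))); [apply: Rmult_le_compat_l; [exact: hl|apply: Rmult_le_compat_l; lra] | lra].
    rewrite -Rsum_distr; move: hl1; rewrite /Rsum => ->; lra.
  - move=> b hb; apply: Rnot_lt_le => hlt.
    pose t := ((b + Ns (u K x)) / 2)%R.
    have ht : (0 < t)%R by rewrite /t; lra.
    have hut : (Ns (u K x) <= t)%R by rewrite /t; lra.
    have := hb t ht (UB_main hK1 hKn hN hS hP hsg ht hut); rewrite /t; lra.
Qed.
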